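(* In the large-election setting of the context, let $\rho=\frac{q-1/2}{1-q}$. If $v_\ell/v_w>\rho$, then there exists $N$ such that for all odd $n>N$ the $n$-voter collective choice problem is adversely correlated; otherwise (if $v_\ell/v_w\le\rho$), for every odd $n$ the $n$-voter collective choice problem is advantageously correlated.
   Context: Fix $q\in[1/2,1)$, $v_w,v_\ell>0$ with $v_\ell/v_w<q/(1-q)$, and $\lambda\in(0,1)$. For each odd $n\ge3$, the $n$-voter collective choice problem is: voters $1,\dots,n$ vote for $p^*$ or $p_*$; a policy wins iff it gets more than $\tau=(n-1)/2$ votes. Exactly $\lceil qn\rceil$ voters are winners, the set of winners being uniformly distributed among subsets of that size; a winner gets payoff $v_w$ higher from $p^*$ than from $p_*$, a loser gets payoff $v_\ell$ lower (so $V_i^d\in\{v_w,-v_\ell\}$). Independently, each voter with probability $\lambda$ privately learns whether she is a winner (good news, or bad news) and otherwise receives an uninformative signal $s^0$. Let $G,B$ be the numbers of voters with good and bad news and $V^G(\kappa)=E[V_i^d\mid G=\kappa,B=0,S_i=s^0]$. The problem is adversely correlated if $V^G(\kappa)<0$ for some $\kappa\in\{1,\dots,\tau\}$ and advantageously correlated otherwise. *)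

(* Defs.v *)
From HB Require Import structures.
From mathcomp Require Import all_boot all_order all_algebra.
Set Implicit Arguments. Unset Strict Implicit. Unset Printing Implicit Defensive.
Import Order.TTheory GRing.Theory Num.Theory.
Local Open Scope ring_scope.

Section Model.
Variable R : archiRealFieldType.
Variables (q vw vl lam : R).

Definition nwin (n : nat) : nat := `|Num.ceil (q * n%:R)|%N.

Definition tau (n : nat) : nat := (n.-1)./2.

(* An outcome: (S, I) = (set of winners, set of informed voters).
   S is uniform among subsets of size nwin n; each voter is informed
   independently with probability lam. *)
Definition prob (n : nat) (w : {set 'I_n} * {set 'I_n}) : R :=
  (if #|w.1| == nwin n then ('C(n, nwin n))%:R^-1 else 0)
  * lam ^+ #|w.2| * (1 - lam) ^+ (n - #|w.2|).

(* V_i^d : payoff difference of voter i between p^* and p_* *)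
Definition Vd (n : nat) (i : 'I_n) (w : {set 'I_n} * {set 'I_n}) : R :=
  if i \in w.1 then vw else - vl.

Definition Gnum (n : nat) (w : {set 'I_n} * {set 'I_n}) : nat := #|w.1 :&: w.2|.
Definition Bnum (n : nat) (w : {set 'I_n} * {set 'I_n}) : nat := #|w.2 :\: w.1|.

(* the conditioning event {G = k, B = 0, S_i = s^0} *)
Definition evG (n : nat) (i : 'I_n) (k : nat) (w : {set 'I_n} * {set 'I_n}) : bool :=
  [&& Gnum w == k, Bnum w == 0%N & i \notin w.2].

Definition VG (n : nat) (i : 'I_n) (k : nat) : R :=
  (\sum_(w | evG i k w) prob w * Vd i w) / (\sum_(w | evG i k w) prob w).

Definition adversely_correlated (n : nat) : Prop :=
  exists (i : 'I_n) (k : nat), [/\ (1 <= k)%N, (k <= tau n)%N & VG i k < 0].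

Definition advantageously_correlated (n : nat) : Prop :=
  ~ adversely_correlated n.
End Model.

(* Main.v *)
Require Import Defs.
From HB Require Import structures.
From mathcomp Require Import all_boot all_order all_algebra.
From mathcomp Require Import ring lra zify.
Import Order.TTheory GRing.Theory Num.Theory.
Local Open Scope ring_scope.

Section Comb.
Variable R : archiRealFieldType.
Variables (q vw vl lam : R).

Lemma sum_const_set (T : finType) (P : pred T) (c : R) :
  \sum_(x | P x) c = #|[set x | P x]|%:R * c.
Proof.
rewrite (eq_bigl (fun x => x \in [set x | P x])); last by move=> x; rewrite inE.
by rewrite sumr_const mulr_natl.
Qed.

Lemma evG_eq n (i : 'I_n) k S I :
  evG i k (S, I) = (I \subset S :\ i) && (#|I| == k).
Proof.
rewrite /evG /Gnum /Bnum /= subsetD1 cards_eq0 setD_eq0.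
case sub: (I \subset S) => /=; last by rewrite !andbF.
by rewrite (setIidPr sub) andbC.
Qed.

Lemma sum_shape n (i : 'I_n) k (f : bool -> R) :
  \sum_(w | evG i k w) prob q lam w * f (i \in w.1) =
  \sum_(S : {set 'I_n}) 'C(#|S :\ i|, k)%:R *
     ((if #|S| == nwin q n then ('C(n, nwin q n))%:R^-1 else 0)
       * lam ^+ k * (1 - lam) ^+ (n - k) * f (i \in S)).
Proof.
transitivity (\sum_(S : {set 'I_n}) \sum_(I : {set 'I_n} | (I \subset S :\ i) && (#|I| == k))
   prob q lam (S, I) * f (i \in S)).
  rewrite pair_big_dep /=.
  by apply: eq_bigl => -[S I] /=; rewrite evG_eq.
apply: eq_bigr => S _.
rewrite -cards_draws -sum_const_set.
apply: eq_bigr => I.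
move=> /andP[_ /eqP cI]; rewrite /prob /= cI. by rewrite -!mulrA.
Qed.


Lemma cnt_out n (i : 'I_n) W :
  #|[set S : {set 'I_n} | (#|S| == W) && (i \notin S)]| = 'C(n.-1, W).
Proof.
have cT : #|[set: 'I_n] :\ i| = n.-1.
  have h := cardsD1 i [set: 'I_n]; rewrite cardsT card_ord inE add1n in h; by rewrite [in RHS]h.
rewrite -cT -cards_draws; apply: eq_card => S.
by rewrite !inE subsetD1 subsetT andbC.
Qed.

Lemma cnt_in n (i : 'I_n) W : (1 <= W)%N ->
  #|[set S : {set 'I_n} | (#|S| == W) && (i \in S)]| = 'C(n.-1, W.-1).
Proof.
move=> W1.
have := cardsID [set S : {set 'I_n} | i \in S] [set S : {set 'I_n} | #|S| == W].
rewrite card_draws card_ord.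
have -> : [set S : {set 'I_n} | #|S| == W] :&: [set S : {set 'I_n} | i \in S] =
          [set S : {set 'I_n} | (#|S| == W) && (i \in S)].
  by apply/setP => S; rewrite !inE.
have -> : [set S : {set 'I_n} | #|S| == W] :\: [set S : {set 'I_n} | i \in S] =
          [set S : {set 'I_n} | (#|S| == W) && (i \notin S)].
  by apply/setP => S; rewrite !inE andbC.
rewrite cnt_out.
case: n i => [|n] i; first by case: i.
case: W W1 => [//|W] _ /=.
rewrite binS; lia.
Qed.

Lemma sum_outer n (i : 'I_n) k (f : bool -> R) : (1 <= nwin q n)%N ->
  \sum_(S : {set 'I_n}) 'C(#|S :\ i|, k)%:R *
     ((if #|S| == nwin q n then ('C(n, nwin q n))%:R^-1 else 0)
       * lam ^+ k * (1 - lam) ^+ (n - k) * f (i \in S)) =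
  ('C(n, nwin q n))%:R^-1 * lam ^+ k * (1 - lam) ^+ (n - k) *
   (('C(n.-1, (nwin q n).-1) * 'C((nwin q n).-1, k))%:R * f true +
    ('C(n.-1, nwin q n) * 'C(nwin q n, k))%:R * f false).
Proof.
move=> W1; set W := nwin q n; set c := _ * _ ^+ k * _.
pose g (b : bool) := 'C(W - b, k)%:R * (c * f b).
transitivity (\sum_(S : {set 'I_n} | #|S| == W) g (i \in S)).

  rewrite [RHS]big_mkcond; apply: eq_bigr => S _; rewrite /g.
  case: (#|S| =P W) => [cS|_]; last by rewrite !mul0r mulr0.
  move: cS; rewrite (cardsD1 i S) => cS.
  by rewrite -cS addKn /c !mulrA cS.
rewrite (bigID (fun S : {set 'I_n} => i \in S)) /=.
rewrite (eq_bigr (fun _ => g true)); last by move=> S /andP[_ ->].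
rewrite [X in _ + X](eq_bigr (fun _ => g false)); last by move=> S /andP[_ /negbTE ->].
rewrite !sum_const_set cnt_in // cnt_out /g subn1 subn0 !natrM.
rewrite mulrDr; congr (_ + _); rewrite /c; ring.
Qed.

Lemma bin_ident n W k : (1 <= W)%N -> (W <= n)%N ->
  ('C(n.-1, W.-1) * 'C(W.-1, k) * (n - W) = 'C(n.-1, W) * 'C(W, k) * (W - k))%N.
Proof.
move=> W1 Wn.
have h1 := mul_bin_left n.-1 W.-1.
have h2 := mul_bin_down W k.
rewrite prednK // in h1.
have e : (n.-1 - W.-1 = n - W)%N by lia.
rewrite e in h1.
move: h1 h2; set x := 'C(n.-1, W.-1); set y := 'C(W.-1, k); set z := 'C(n.-1, W); set t := 'C(W, k).
move=> h1 h2.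
have -> : (x * y * (n - W) = ((n - W) * x) * y)%N by ring.
rewrite -h1.
have -> : (W * z * y = z * (W * y))%N by ring.
rewrite h2; ring.
Qed.

Lemma VG_formula n (i : 'I_n) k : (1 <= nwin q n)%N ->
  let K := ('C(n, nwin q n))%:R^-1 * lam ^+ k * (1 - lam) ^+ (n - k) in
  let a := ('C(n.-1, (nwin q n).-1) * 'C((nwin q n).-1, k))%N in
  let b := ('C(n.-1, nwin q n) * 'C(nwin q n, k))%N in
  VG q vw vl lam i k = (K * (a%:R * vw + b%:R * - vl)) / (K * (a%:R * 1 + b%:R * 1)).
Proof.
move=> W1 K a b.
rewrite /VG.
have := @sum_shape _ i k (fun b => if b then vw else - vl).
have := @sum_shape _ i k (fun b => 1).
rewrite (@sum_outer _ i k (fun b => 1)) // (@sum_outer _ i k (fun b => if b then vw else - vl)) // => <- <-.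
by congr (_ / _); apply: eq_bigr => w _; rewrite ?mulr1.

Qed.

Lemma VG_neg n (i : 'I_n) k : (1 <= k)%N -> (k < nwin q n)%N -> (nwin q n <= n)%N ->
  0 < lam -> lam < 1 ->
  (VG q vw vl lam i k < 0 <-> vw * (nwin q n - k)%:R < vl * (n - nwin q n)%:R).
Proof.
move=> k1 kW Wn l0 l1.
have W1 : (1 <= nwin q n)%N by lia.
rewrite VG_formula //.
set W := nwin q n.
set K := _ * _ ^+ k * _.
set a := ('C(n.-1, W.-1) * 'C(W.-1, k))%N.
set b := ('C(n.-1, W) * 'C(W, k))%N.
have hK : 0 < K.
  rewrite /K; apply: mulr_gt0; first apply: mulr_gt0.
  - by rewrite invr_gt0 ltr0n bin_gt0.
  - exact: exprn_gt0.
  - by apply: exprn_gt0; rewrite subr_gt0.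
have ha : (0 < a)%N by rewrite /a muln_gt0 !bin_gt0; lia.
have hab : (a * (n - W) = b * (W - k))%N by apply: bin_ident.
have haR : 0 < (a%:R : R) by rewrite ltr0n.
have hkW : 0 < ((W - k)%:R : R) by rewrite ltr0n subn_gt0.
have habR : (a%:R * (n - W)%:R = b%:R * (W - k)%:R :> R) by rewrite -!natrM hab.
have hbR : 0 <= (b%:R : R) by [].
rewrite ltr_pdivrMr; last by apply: mulr_gt0 => //; rewrite !mulr1; apply: ltr_wpDr.
rewrite mul0r pmulr_rlt0 //.
move: haR hkW habR hbR; set A := (a%:R : R); set B := (b%:R : R);
  set D := ((W - k)%:R : R); set E := ((n - W)%:R : R) => haR hkW habR hbR.
split => h.
- have h1 : A * vw * D < B * vl * D by rewrite ltr_pM2r //; lra.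
  have h2 : A * (vw * D) < A * (vl * E).
    have -> : A * (vl * E) = B * vl * D by rewrite mulrCA habR; ring.
    by rewrite mulrA.
  by rewrite ltr_pM2l in h2.
- have h1 : A * (vw * D) < A * (vl * E) by rewrite ltr_pM2l.
  have h2 : A * vw * D < B * vl * D.
    have <- : A * (vl * E) = B * vl * D by rewrite mulrCA habR; ring.
    by rewrite -mulrA.
  rewrite ltr_pM2r // in h2; lra.
Qed.

Lemma W_bounds n : 0 <= q ->
  q * n%:R <= (nwin q n)%:R /\ (nwin q n)%:R < q * n%:R + 1.
Proof.
move=> q0.
have c0 : 0 <= Num.ceil (q * n%:R).
  rewrite ceil_ge0; apply: (@lt_le_trans _ _ 0) => //; first by rewrite ltrN10.
  exact: mulr_ge0.
have -> : (nwin q n)%:R = (Num.ceil (q * n%:R))%:~R :> R.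
  by rewrite /nwin natr_absz ger0_norm.
split; first exact: ceil_ge.
have := ceilB1_lt (q * n%:R); rewrite intrB /= => h; lra.
Qed.

Lemma tau_odd n : odd n -> (n = (tau n).*2.+1)%N.
Proof.
move=> on; rewrite /tau.
case: n on => [//|m] /= om.
have := odd_double_half m; rewrite (negbTE om) add0n => ->.
done.
Qed.

Lemma nat_facts n : odd n -> (3 <= n)%N -> 1 / 2 <= q -> q < 1 ->
  [/\ (1 <= tau n)%N, (tau n < nwin q n)%N, (nwin q n <= n)%N &
      n%:R = 2 * (tau n)%:R + 1 :> R].
Proof.
move=> on n3 q12 q1.
have e := @tau_odd n on.
have nR : n%:R = 2 * (tau n)%:R + 1 :> R.
  by rewrite {1}e -addn1 natrD -muln2 natrM mulrC.
have q0 : 0 <= q by apply: le_trans q12; lra.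
have [lo hi] := @W_bounds n q0.
have n0 : 0 <= (n%:R : R) by [].
split => //.
- move: e n3 => ->; case: (tau n) => //.
- rewrite -(ltr_nat R); have : (1 / 2) * n%:R <= q * n%:R by rewrite ler_wpM2r.
  move=> h; have h3 : (1/2) * n%:R = (tau n)%:R + 1/2 :> R by rewrite nR; field.
  have : (tau n)%:R + 1/2 <= (nwin q n)%:R :> R by lra.
  move=> h2; lra.
- rewrite -ltnS -(ltr_nat R) -addn1 natrD.
  have : q * n%:R <= n%:R by rewrite ler_piMl // ltW.
  move=> h; lra.
Qed.

End Comb.

Theorem proposition4 (R : archiRealFieldType) (q vw vl lam : R) :
  1 / 2 <= q -> q < 1 -> 0 < vw -> 0 < vl -> vl / vw < q / (1 - q) ->
  0 < lam -> lam < 1 ->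
  let rho := (q - 1 / 2) / (1 - q) in
  (rho < vl / vw ->
     exists N : nat, forall n : nat, odd n -> (3 <= n)%N -> (N < n)%N ->
       adversely_correlated q vw vl lam n) /\
  (vl / vw <= rho ->
     forall n : nat, odd n -> (3 <= n)%N ->
       advantageously_correlated q vw vl lam n).
Proof.
move=> q12 q1 vw0 vl0 _ l0 l1 rho.
have q0 : 0 <= q by apply: le_trans q12; lra.
have q1' : 0 < 1 - q by lra.
have rhoq : rho * (1 - q) = q - 1 / 2 by rewrite /rho; field; lra.
split.
- move=> hr.
  have hr' : rho * vw < vl by rewrite -ltr_pdivlMr.
  set d := vl * (1 - q) - vw * (q - 1 / 2).
  have d0 : 0 < d.
    have : rho * vw * (1 - q) < vl * (1 - q) by rewrite ltr_pM2r.
    rewrite /d mulrAC rhoq => h; lra.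
  set x := (3 / 2 * vw + vl) / d.
  have x0 : 0 <= x by apply: divr_ge0; lra.
  exists (Num.Def.archi_bound x) => n on n3 Nn.
  have [t1 tW Wn nR] := @nat_facts R q n on n3 q12 q1.
  have [lo hi] := @W_bounds R q n q0.
  have xn : x < n%:R.
    apply: lt_trans (archi_boundP x0) _; by rewrite ltr_nat.
  have n0 : (0 < n)%N by apply: leq_trans n3.
  exists (Ordinal n0), (tau n); split => //.
  apply/VG_neg => //.
  rewrite !natrB //; last exact: ltnW.
  move: xn; rewrite ltr_pdivrMr // => xn.
  move: lo hi nR xn.
  set N := (n%:R : R); set Wr := ((nwin q n)%:R : R); set T := ((tau n)%:R : R).
  move=> lo hi nR xn.
  have h1 : vw * Wr < vw * (q * N + 1) by rewrite ltr_pM2l.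
  have h2 : vl * Wr < vl * (q * N + 1) by rewrite ltr_pM2l.
  rewrite /d in xn.
  have e : T = (N - 1) / 2 by rewrite nR; field.
  rewrite e.
  clear -h1 h2 xn vw0 vl0; lra.
- move=> hr n on n3 [i [k [k1 kt]]].
  have [t1 tW Wn nR] := @nat_facts R q n on n3 q12 q1.
  have [lo hi] := @W_bounds R q n q0.
  have kW : (k < nwin q n)%N by apply: leq_ltn_trans kt tW.
  rewrite VG_neg //.
  rewrite !natrB //; last exact: ltnW.
  have hr' : vl <= rho * vw by rewrite -ler_pdivrMr.
  have rho0 : 0 <= rho by rewrite /rho; apply: divr_ge0; lra.
  have kT : (k%:R : R) <= (tau n)%:R by rewrite ler_nat.
  move: lo hi nR kT.
  set N := (n%:R : R); set Wr := ((nwin q n)%:R : R); set T := ((tau n)%:R : R).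
  set K := (k%:R : R).
  move=> lo hi nR kT h.
  have E0 : 0 <= N - Wr by rewrite subr_ge0 /N /Wr ler_nat.
  have h1 : vl * (N - Wr) <= rho * vw * (N - Wr) by rewrite ler_wpM2r.
  have h2 : rho * vw * (N - Wr) <= rho * vw * (N - q * N).
    by rewrite ler_wpM2l ?(mulr_ge0 rho0 (ltW vw0)) //; clear -lo; lra.
  have h3 : rho * vw * (N - q * N) = vw * N * (q - 1 / 2).
    by rewrite -rhoq; ring.
  have h4 : vw * (N * (q - 1 / 2) + 1 / 2) <= vw * (Wr - K).
    rewrite ler_pM2l //.
    have e : T = (N - 1) / 2 by rewrite nR; field.
    rewrite e in kT; clear -kT lo; lra.
  clear -h1 h2 h3 h4 h vw0; lra.
Qed.
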